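(* Let $K$ be a simplicial complex with weight function $w_K\equiv1$, and let $L$ be a subcomplex of $K$ with $S_n(L)=S_n(K)$, equipped with a weight function $w_L$ taking values in $\{0,1\}$. Let $\theta_1\le\theta_2\le\dots$ and $\lambda_1\le\lambda_2\le\dots$ be the eigenvalues of $\mathcal{L}^{up}_n(L,w_L)$ and $\mathcal{L}^{up}_n(K,w_K)$, respectively. Then $\theta_k\le\lambda_k$ for every $k$.
   Context: $S_j(K)$ is the set of $j$-faces; $C^j(K,\mathbb{R})$ the real cochains on oriented $j$-faces, coboundary $(\delta_j f)([v_0,\dots,v_{j+1}])=\sum_i(-1)^if([v_0,\dots,\hat v_i,\dots,v_{j+1}])$. For a weight function $w\ge0$ on faces, $(f,g)=\sum_{F\in S_j}w(F)f([F])g([F])$ and the formal adjoint is $(\delta_j^*\bar f)([F])=\sum_{\bar F\in S_{j+1},\bar F\supset F}\frac{w(\bar F)}{w(F)}\mathrm{sgn}([F],\partial[\bar F])\bar f([\bar F])$ if $w(F)\ne0$, and $0$ if $w(F)=0$, where $\mathrm{sgn}([v_0,..,\hat v_i,..,v_{j+1}],\partial[v_0,..,v_{j+1}])=(-1)^i$. The up-Laplacian is $\mathcal{L}^{up}_n(K,w)=\delta_n^*\delta_n$ on $C^n$; with $w\equiv1$ it is the combinatorial up-Laplacian. Both Laplacians act on $n$-cochains of spaces of the same dimension $|S_n(K)|$. *)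

(* Defs.v *)
From HB Require Import structures.
From mathcomp Require Import all_boot all_order all_algebra.
From mathcomp Require Import reals.
Set Implicit Arguments. Unset Strict Implicit. Unset Printing Implicit Defensive.
Import Order.TTheory GRing.Theory Num.Theory.
Local Open Scope ring_scope.

(* Vertices are 'I_N; the natural order on vertices fixes the canonical
   orientation [v_0,...,v_j] (v_0 < ... < v_j) of every face.  A cochain is
   represented by its values on canonically oriented faces. *)

Section Simplicial.
Variable N : nat.
Notation face := {set 'I_N}.

Definition is_complex (K : {set face}) : Prop :=
  set0 \notin K /\
  forall F G : face, F \in K -> G \subset F -> G != set0 -> G \in K.

Definition faces (K : {set face}) (j : nat) : {set face} :=
  [set F in K | #|F| == j.+1].

Variable R : realType.

(* sgn([Fb \ v], d[Fb]) = (-1)^i where v is the i-th vertex of Fb *)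
Definition bsign (Fb : face) (v : 'I_N) : R :=
  (-1) ^+ #|[set u in Fb | (val u < val v)%N]|.

Definition coboundary (f : face -> R) (Fb : face) : R :=
  \sum_(v in Fb) bsign Fb v * f (Fb :\ v).

(* weighted up-Laplacian  delta_n^* delta_n  on C^n(K) *)
Definition up_lap (K : {set face}) (w : face -> R) (n : nat)
    (f : face -> R) (F : face) : R :=
  if w F == 0 then 0 else
  \sum_(Fb in faces K n.+1)
    \sum_(v in Fb | Fb :\ v == F) (w Fb / w F) * bsign Fb v * coboundary f Fb.

Definition up_lap_mx (K : {set face}) (w : face -> R) (n : nat)
    : 'M[R]_#|faces K n| :=
  \matrix_(i, j) up_lap K w n
     (fun G => if G == enum_val j then 1 else 0) (enum_val i).

End Simplicial.

Definition eigen_seq (R : realType) (m : nat) (A : 'M[R]_m) (s : seq R) : Prop :=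
  sorted <=%R s /\ char_poly A = \prod_(x <- s) ('X - x%:P).

(* Main.v *)
Require Import Defs.
From HB Require Import structures.
From mathcomp Require Import all_boot all_order all_algebra.
From mathcomp Require Import reals.
From mathcomp Require Import zify.
From mathcomp Require Import complex.
Set Implicit Arguments. Unset Strict Implicit. Unset Printing Implicit Defensive.
Import Order.TTheory GRing.Theory Num.Theory.
Local Open Scope ring_scope.

Section CharIdem.
Variable F : fieldType.

Lemma zmod_aux (V : zmodType) (a b c d : V) : a - b - (c - d) = a - (c + b) + d.
Proof. by rewrite opprB opprD [d - c]addrC [- c - b]addrC !addrA. Qed.

Lemma char_poly_mx_mul m (A B : 'M[F]_m) :
  char_poly_mx A *m char_poly_mx B =
  'X *: ('X%:M - map_mx polyC (A + B)) + map_mx polyC (A *m B).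
Proof.
rewrite /char_poly_mx mulmxBl !mulmxBr !mul_scalar_mx mul_mx_scalar.
rewrite -map_mxM map_mxD !scalerBr scalerDr.
rewrite scale_scalar_mx; exact: zmod_aux.
Qed.

Lemma mapP0 m : map_mx (@polyC F) (0 : 'M[F]_m) = 0.
Proof. by apply/matrixP=> i j; rewrite !mxE. Qed.

Lemma char_nil m (N : 'M[F]_m) : N *m N = 0 -> char_poly N = 'X^m.
Proof.
move=> NN.
have H : char_poly N * char_poly (- N) = 'X^(m + m).
  rewrite /char_poly -det_mulmx char_poly_mx_mul subrr mulmxN NN oppr0.
  by rewrite !mapP0 addr0 subr0 detZ det_scalar exprD.
have : char_poly N %| ('X - 0%:P) ^+ (m + m).
  by rewrite subr0 -H dvdp_mulr.
case/dvdp_exp_XsubCP => k _; rewrite subr0.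
rewrite eqp_monic ?char_poly_monic ?monicXn // => /eqP Ek.
have /eqP : size (char_poly N) = size ('X^k : {poly F}) by rewrite Ek.
by rewrite size_char_poly size_polyXn eqSS => /eqP km; rewrite Ek -km.
Qed.

Lemma char_poly_idem m (D S : 'M[F]_m) :
  D *m D = D -> char_poly (D *m S) = char_poly (D *m S *m D).
Proof.
move=> DD.
set E := 1%:M - D.
have ED : E *m D = 0 by rewrite mulmxBl mul1mx DD subrr.
set N := D *m S *m E.
have NN : N *m N = 0.
  by rewrite /N !mulmxA -(mulmxA (D *m S) E D) ED mulmx0 !mul0mx.
have NT : N *m (D *m S *m D) = 0.
  by rewrite /N !mulmxA -(mulmxA (D *m S) E D) ED mulmx0 !mul0mx.
have NTs : N + D *m S *m D = D *m S.
  by rewrite /N -mulmxDr /E addrNK mulmx1.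
have H : char_poly N * char_poly (D *m S *m D) = 'X^m * char_poly (D *m S).
  rewrite /char_poly -det_mulmx char_poly_mx_mul NT mapP0 addr0 NTs.
  by rewrite detZ.
rewrite char_nil // in H.
have XN0 : ('X^m : {poly F}) != 0 by rewrite expf_neq0 // polyX_eq0.
exact: (mulfI XN0 (esym H)).
Qed.
End CharIdem.

Section Spec.
Local Open Scope sesquilinear_scope.
Variable C : numClosedFieldType.

Definition qf m (x : 'rV[C]_m) (A : 'M[C]_m) : C := (x *m A *m x^t*) 0 0.
Definition nrm m (x : 'rV[C]_m) : C := (x *m x^t*) 0 0.

Lemma adjM m n p (X : 'M[C]_(m, n)) (Y : 'M[C]_(n, p)) :
  (X *m Y)^t* = Y^t* *m X^t*.
Proof. by rewrite trmx_mul map_mxM. Qed.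

Lemma nrmE m (x : 'rV[C]_m) : nrm x = \sum_i x 0 i * (x 0 i)^*.
Proof. by rewrite /nrm mxE; apply: eq_bigr => i _; rewrite !mxE. Qed.

Lemma nrm_ge0 m (x : 'rV[C]_m) : 0 <= nrm x.
Proof. by rewrite nrmE; apply: sumr_ge0 => i _; apply: mul_conjC_ge0. Qed.

Lemma nrm_eq0 m (x : 'rV[C]_m) : nrm x = 0 -> x = 0.
Proof.
rewrite nrmE => /psumr_eq0P H; apply/rowP => i; rewrite mxE.
by apply/eqP; rewrite -mul_conjC_eq0; apply/eqP/H => // j _; apply: mul_conjC_ge0.
Qed.

Lemma qf_diag m (c : 'rV[C]_m) e :
  qf c (diag_mx e) = \sum_i e 0 i * (c 0 i * (c 0 i)^*).
Proof.
rewrite /qf mxE; apply: eq_bigr => i _; rewrite !mxE.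
rewrite (bigD1 i) //= big1 ?addr0; last first.
  move=> j ji; rewrite !mxE; case: eqP => [E|_]; last by rewrite mulr0n mulr0.
  by rewrite E eqxx in ji.
by rewrite !mxE eqxx mulr1n mulrCA mulrA.
Qed.

Lemma char_sim m (V U B : 'M[C]_m) :
  V *m U = 1%:M -> char_poly (V *m B *m U) = char_poly B.
Proof.
move=> VU.
have E : char_poly_mx (V *m B *m U) =
    map_mx polyC V *m char_poly_mx B *m map_mx polyC U.
  rewrite /char_poly_mx mulmxBr mulmxBl -!map_mxM.
  rewrite mul_mx_scalar -scalemxAl -map_mxM VU.
  by rewrite (map_scalar_mx polyC) scale_scalar_mx mulr1.
rewrite /char_poly E !det_mulmx mulrAC -det_mulmx -map_mxM VU.
by rewrite (map_scalar_mx polyC) det_scalar expr1n mul1r.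
Qed.

Section SA.
Variables (m : nat) (A : 'M[C]_m).
Hypothesis hA : A^t* = A.
Let U := spectralmx A.
Let d := spectral_diag A.

Lemma sa_normal : A \is normalmx.
Proof. by apply/normalmxP; rewrite hA. Qed.

Lemma spec_unitary : U *m U^t* = 1%:M.
Proof. by apply/unitarymxP; apply: spectral_unitarymx. Qed.

Lemma spec_A : A = invmx U *m diag_mx d *m U.
Proof. by apply/orthomx_spectralP; apply: sa_normal. Qed.

Lemma spec_UA : U *m A = diag_mx d *m U.
Proof.
by rewrite {1}spec_A !mulmxA mulmxV ?mul1mx //; apply: spectral_unit.
Qed.

Lemma spec_char : char_poly A = \prod_(i < m) ('X - (d 0 i)%:P).
Proof.
rewrite {1}spec_A char_sim; last by rewrite mulVmx //; apply: spectral_unit.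
rewrite char_poly_trig ?diag_mx_is_trig //.
by apply: eq_bigr => i _; rewrite mxE eqxx mulr1n.
Qed.

Lemma spec_perm (s : seq C) : char_poly A = \prod_(x <- s) ('X - x%:P) ->
  perm_eq s [seq d 0 i | i <- enum 'I_m].
Proof.
move=> hs; apply: prod_XsubC_eq; rewrite -hs spec_char big_map big_enum /=.
by apply: eq_bigl => i; rewrite inE.
Qed.

Lemma spec_qf (c : 'rV_m) : qf (c *m U) A = \sum_i d 0 i * (c 0 i * (c 0 i)^*).
Proof.
rewrite /qf adjM -!mulmxA (mulmxA U) spec_UA -!mulmxA.
rewrite (mulmxA U) spec_unitary mul1mx mulmxA -qf_diag //.
Qed.

Definition ssub (S : {set 'I_m}) : 'M[C]_(#|S|, m) :=
  rowsub (fun i : 'I_#|S| => enum_val i) U.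

Lemma ssub_unitary (S : {set 'I_m}) : ssub S *m (ssub S)^t* = 1%:M.
Proof.
apply/matrixP => i j; rewrite !mxE.
transitivity ((U *m U^t*) (enum_val i) (enum_val j)).
  by rewrite mxE; apply: eq_bigr => k _; rewrite !mxE.
rewrite spec_unitary !mxE (inj_eq enum_val_inj) //.
Qed.

Lemma ssub_rank (S : {set 'I_m}) : \rank (ssub S) = #|S|.
Proof. by apply: mxrank_unitary; apply/unitarymxP; apply: ssub_unitary. Qed.

Lemma ssub_A (S : {set 'I_m}) :
  ssub S *m A = diag_mx (\row_i d 0 (enum_val i)) *m ssub S.
Proof.
rewrite /ssub mul_rowsub_mx spec_UA !mul_diag_mx.
by apply/matrixP => i j; rewrite !mxE.
Qed.

Lemma ssub_qf (S : {set 'I_m}) (c : 'rV_#|S|) :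
  qf (c *m ssub S) A = \sum_i d 0 (enum_val i) * (c 0 i * (c 0 i)^*).
Proof.
rewrite /qf adjM -!mulmxA (mulmxA (ssub S)) ssub_A -!mulmxA.
rewrite (mulmxA (ssub S)) ssub_unitary mul1mx mulmxA.
move: (qf_diag c (\row_i d 0 (enum_val i))); rewrite /qf => ->.
by apply: eq_bigr => i _; rewrite mxE.
Qed.

Lemma ssub_nrm (S : {set 'I_m}) (c : 'rV_#|S|) : nrm (c *m ssub S) = nrm c.
Proof.
by rewrite /nrm adjM -!mulmxA (mulmxA (ssub S)) ssub_unitary mul1mx.
Qed.

End SA.

Lemma card_count (T : finType) (P : pred T) : #|[set i | P i]| = count P (enum T).
Proof.
rewrite cardsE cardE /enum_mem size_filter /= count_filter.
by apply: eq_count => x; rewrite /= andbT.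
Qed.

Lemma spec_count m (A : 'M[C]_m) (s : seq C) (P : pred C) :
  A^t* = A -> char_poly A = \prod_(x <- s) ('X - x%:P) ->
  #|[set i | P (spectral_diag A 0 i)]| = count P s.
Proof.
move=> hA hs; rewrite card_count; move/permP: (spec_perm hA hs) => E.
by rewrite (E P) [RHS]count_map.
Qed.

Lemma spec_mem m (A : 'M[C]_m) (s : seq C) i :
  A^t* = A -> char_poly A = \prod_(x <- s) ('X - x%:P) ->
  spectral_diag A 0 i \in s.
Proof.
move=> hA hs; rewrite (perm_mem (spec_perm hA hs)).
by apply: map_f; rewrite mem_enum.
Qed.

Lemma key_count m (P Q : 'M[C]_m) (s u : seq C) (t : C) :
  P^t* = P -> Q^t* = Q -> all (fun x => x \is Num.real) s -> t \is Num.real ->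
  char_poly P = \prod_(x <- s) ('X - x%:P) ->
  char_poly Q = \prod_(x <- u) ('X - x%:P) ->
  (forall x : 'rV_m,
     (x <= ssub P [set i | (t < spectral_diag P 0 i)%R])%MS -> qf x P <= qf x Q) ->
  (count (fun x => (x <= t)%R) u <= count (fun x => (x <= t)%R) s)%N.
Proof.
move=> hP hQ sR tR hs hu H.
set S1 := [set i | spectral_diag Q 0 i <= t].
set S2 := [set i | t < spectral_diag P 0 i].
set V1 := ssub Q S1; set V2 := ssub P S2.
have cap : (V1 :&: V2)%MS = 0.
  apply/eqP/rowV0P => x; rewrite sub_capmx => /andP[x1 x2].
  have [c1 ec1] := submxP x1; have [c2 ec2] := submxP x2.
  have q1 : qf x Q <= t * nrm x.
    rewrite {1}ec1 ssub_qf // ec1 ssub_nrm // nrmE mulr_sumr.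
    apply: ler_sum => i _; apply: ler_wpM2r; first exact: mul_conjC_ge0.
    by have := enum_valP i; rewrite inE.
  have q2 : \sum_i (spectral_diag P 0 (enum_val i) - t) * (c2 0 i * (c2 0 i)^*)
         = qf x P - t * nrm x.
    rewrite {1}ec2 ssub_qf // ec2 ssub_nrm // nrmE mulr_sumr -sumrB.
    by apply: eq_bigr => i _; rewrite mulrBl.
  have ge0 : forall i, 0 <= (spectral_diag P 0 (enum_val i) - t) * (c2 0 i * (c2 0 i)^*).
    move=> i; apply: mulr_ge0; last exact: mul_conjC_ge0.
    by have := enum_valP i; rewrite inE subr_ge0 => /ltW.
  have s0 : \sum_i (spectral_diag P 0 (enum_val i) - t) * (c2 0 i * (c2 0 i)^*) = 0.
    apply/eqP; rewrite eq_le sumr_ge0 ?andbT; last by move=> i _; apply: ge0.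
    rewrite q2 subr_le0; apply: le_trans q1; apply: H.
    by rewrite ec2 submxMl.
  have c20 : c2 = 0.
    apply/rowP => i; rewrite mxE.
    have := psumr_eq0P (fun i _ => ge0 i) s0 (isT : true) (i := i).
    move/eqP; rewrite mulf_eq0 mul_conjC_eq0 subr_eq0 => /orP[|/eqP //].
    have := enum_valP i; rewrite inE => /lt_eqF; rewrite eq_sym => -> //.
  by rewrite ec2 c20 mul0mx.
have rk := mxrank_disjoint_sum cap.
have le := rank_leq_col (V1 + V2)%MS.
rewrite rk /V1 /V2 !ssub_rank // in le.
have e1 : #|S1| = count (fun x => (x <= t)%R) u by apply: spec_count.
have e2 : (#|S2| + count (fun x => (x <= t)%R) s = m)%N.
  rewrite -(spec_count (fun x => (x <= t)%R) hP hs).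
  transitivity #|'I_m|; last exact: card_ord.
  rewrite -(cardsC S2); congr (_ + _)%N.
  apply: eq_card => i; rewrite !inE real_ltNge ?negbK //.
  by apply: (allP sR); apply: spec_mem hs.
by rewrite -e1 -(leq_add2l #|S2|) e2 addnC.
Qed.

Definition is01 m (d : 'rV[C]_m) := forall i, d 0 i = 0 \/ d 0 i = 1.

Lemma diag01_idem m (d : 'rV[C]_m) : is01 d -> diag_mx d *m diag_mx d = diag_mx d.
Proof.
move=> hd; rewrite mul_diag_mx; apply/matrixP => i j; rewrite !mxE.
case: eqP => [->|_]; last by rewrite !mulr0n mulr0.
by rewrite !mulr1n; case: (hd j) => ->; rewrite ?mul0r ?mul1r.
Qed.

Lemma diag01_adj m (d : 'rV[C]_m) : is01 d -> (diag_mx d)^t* = diag_mx d.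
Proof.
move=> hd; apply/matrixP => i j; rewrite !mxE.
have [<-|ne] := eqVneq i j; rewrite ?mulr1n ?mulr0n ?conjC0 //.
by case: (hd i) => ->; [exact: conjC0 | exact: conjC1].
Qed.

Lemma qfD m (x : 'rV[C]_m) A1 A2 : qf x (A1 + A2) = qf x A1 + qf x A2.
Proof. by rewrite /qf mulmxDr mulmxDl mxE. Qed.

Lemma qf_gram m p (x : 'rV[C]_m) (G : 'M[C]_(p, m)) :
  qf x (G^t* *m G) = nrm (x *m G^t*).
Proof. by rewrite /qf /nrm adjM trmxCK !mulmxA. Qed.

Lemma spec_diag_ge0 m p (G : 'M[C]_(p, m)) i :
  0 <= spectral_diag (G^t* *m G) 0 i.
Proof.
set Q := G^t* *m G.
have hQ : Q^t* = Q by rewrite /Q adjM trmxCK.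
have := spec_qf hQ (delta_mx 0 i).
rewrite qf_gram (bigD1 i) //= big1 ?addr0; last first.
  by move=> j ji; rewrite mxE (negPf ji) andbF mul0r mulr0.
rewrite mxE !eqxx /= conjC1 !mulr1 => <-; apply: nrm_ge0.
Qed.

Lemma main_C m p (dd : 'rV[C]_m) (ww : 'rV[C]_p) (B : 'M[C]_(p, m))
    (s u : seq C) (t : C) :
  is01 dd -> is01 ww ->
  all (fun x => x \is Num.real) s -> t \is Num.real ->
  char_poly (diag_mx dd *m B^t* *m diag_mx ww *m B) = \prod_(x <- s) ('X - x%:P) ->
  char_poly (B^t* *m B) = \prod_(x <- u) ('X - x%:P) ->
  (count (fun x => (x <= t)%R) u <= count (fun x => (x <= t)%R) s)%N.
Proof.
move=> hd hw sR tR hs hu.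
set D := diag_mx dd; set W := diag_mx ww.
have DD : D *m D = D by apply: diag01_idem.
have Da : D^t* = D by apply: diag01_adj.
have Wa : W^t* = W by apply: diag01_adj.
set S := B^t* *m W *m B.
have Sa : S^t* = S by rewrite /S !adjM trmxCK Wa mulmxA.
set P := D *m S *m D.
have hP : P^t* = P.
  by rewrite /P [(_ *m D)^t*]adjM [(D *m S)^t*]adjM Sa Da mulmxA.
have hs' : char_poly P = \prod_(x <- s) ('X - x%:P).
  by rewrite /P -char_poly_idem // -hs /S !mulmxA.
set Q := B^t* *m B.
have hQ : Q^t* = Q by rewrite /Q adjM trmxCK.
have [tge0|tlt0] := boolP (0 <= t); last first.
  suff -> : count (fun x => (x <= t)%R) u = 0%N by [].
  apply/eqP; rewrite -leqn0 leqNgt -has_count; apply/hasPn => x xu /=.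
  have := xu; rewrite (perm_mem (spec_perm hQ hu)) => /mapP [i _ ->].
  rewrite -real_ltNge ?(realE, real0) //; last first.
    by rewrite spec_diag_ge0.
  apply: (lt_le_trans (y := 0)); last exact: spec_diag_ge0.
  by rewrite real_ltNge ?real0.
apply: (key_count hP hQ sR tR hs' hu) => x.
set S2 := [set i | _]; set V2 := ssub P S2 => xV.
have V2D : V2 *m D = V2.
  have e1 := ssub_A hP S2.
  have PD : P *m D = P by rewrite /P -mulmxA DD.
  have : diag_mx (\row_i spectral_diag P 0 (enum_val i)) *m (V2 *m D) =
         diag_mx (\row_i spectral_diag P 0 (enum_val i)) *m V2.
    by rewrite mulmxA -e1 -mulmxA PD.
  rewrite !mul_diag_mx => /matrixP E; apply/matrixP => i j.
  have := E i j; rewrite !mxE; apply: mulfI.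
  have := enum_valP i; rewrite inE => /(le_lt_trans tge0).
  by rewrite lt0r => /andP[].
have [c ec] := submxP xV.
have xD : x *m D = x by rewrite ec -mulmxA V2D.
have qP : qf x P = qf x S.
  have xDa : D *m x^t* = x^t* by rewrite -{1}Da -adjM xD.
  by rewrite /qf /P !mulmxA xD -(mulmxA _ D (x^t*)) xDa.
set G := diag_mx (\row_b (1 - ww 0 b)) *m B.
have h1w : is01 (\row_b (1 - ww 0 b)).
  by move=> b; rewrite mxE; case: (hw b) => ->; rewrite ?subr0 ?subrr; auto.
have QSG : Q = S + G^t* *m G.
  rewrite /G adjM (diag01_adj h1w) mulmxA -(mulmxA _ _ (diag_mx _)) diag01_idem //.
  rewrite /S /Q -mulmxA -mulmxA -mulmxDr -mulmxDl.
  have -> : W + diag_mx (\row_b (1 - ww 0 b)) = 1%:M.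
    apply/matrixP => i j; rewrite !mxE.
    by rewrite -mulrnDl addrC subrK.
  by rewrite mul1mx.
rewrite qP QSG qfD qf_gram lerDl; apply: nrm_ge0.
Qed.
End Spec.

Lemma count_nth (R : realDomainType) (s u : seq R) :
  sorted <=%R s -> sorted <=%R u -> size s = size u ->
  (forall t : R, (count (fun x => (x <= t)%R) u <= count (fun x => (x <= t)%R) s)%N) ->
  forall k, (k < size u)%N -> s`_k <= u`_k.
Proof.
move=> ss su sz H k ku; rewrite leNgt; apply/negP => lt.
set P := fun x : R => (x <= u`_k)%R.
have H' : (count P u <= count P s)%N := H u`_k.
have c1 : (k.+1 <= count P u)%N.
  rewrite -[u](cat_take_drop k.+1) count_cat.
  have -> : count P (take k.+1 u) = k.+1.
    rewrite -[X in _ = X](size_takel (s := u) ku).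
    apply/eqP; rewrite -all_count; apply/(all_nthP 0) => j.
    rewrite size_takel // => jk; rewrite nth_take // /P.
    by apply: (le_sorted_leq_nth 0 su); rewrite ?inE /=; lia.
  lia.
have c2 : (count P s <= k)%N.
  rewrite -[s](cat_take_drop k) count_cat.
  have -> : count P (drop k s) = 0%N.
    apply/eqP; rewrite -leqn0 leqNgt -has_count; apply/hasPn => x.
    case/(nthP 0) => j; rewrite size_drop nth_drop => jk <-.
    rewrite /P -ltNge; apply: (lt_le_trans lt).
    have jk' : (j < size s - k)%N := jk.
    by apply: (le_sorted_leq_nth 0 ss); rewrite ?inE /=; lia.
  have := count_size P (take k s); rewrite size_take; case: ltnP => ?; lia.
move: H' c1 c2; clear; lia.
Qed.

Section Comb.
Variables (R : realType) (N : nat).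
Notation face := {set 'I_N}.

Definition ind (G : face) : face -> R := fun H => if H == G then 1 else 0.

Definition lapmx (S K : {set face}) (w : face -> R) (n : nat) : 'M[R]_#|S| :=
  \matrix_(i, j) up_lap K w n (ind (enum_val j)) (enum_val i).

Lemma lapmxE K w n : up_lap_mx K w n = lapmx (faces K n) K w n.
Proof. by []. Qed.

Definition Bm (K : {set face}) (n : nat) : 'M[R]_(#|faces K n.+1|, #|faces K n|) :=
  \matrix_(b, j) coboundary (ind (enum_val j)) (enum_val b).

Lemma cob_ind Fb G :
  coboundary (ind G) Fb = \sum_(v in Fb | Fb :\ v == G) bsign R Fb v.
Proof.
rewrite /coboundary big_mkcondr /=; apply: eq_bigr => v _.
by rewrite /ind; case: ifP; rewrite ?mulr1 ?mulr0.
Qed.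

Lemma inner_sum (a : R) (Fb F : face) (c : R) :
  \sum_(v in Fb | Fb :\ v == F) a * bsign R Fb v * c =
  a * coboundary (ind F) Fb * c.
Proof. by rewrite cob_ind mulr_sumr mulr_suml. Qed.

Lemma lapK K n : up_lap_mx K (fun _ => 1) n = (Bm K n)^T *m Bm K n.
Proof.
apply/matrixP => i j; rewrite !mxE /up_lap oner_eq0 /=.
rewrite big_enum_val; apply: eq_bigr => b _.
by rewrite inner_sum divr1 mul1r !mxE.
Qed.

Lemma lapL (K L : {set face}) (wL : face -> R) n :
  L \subset K -> faces L n = faces K n ->
  (forall F, F \in L -> wL F = 0 \/ wL F = 1) ->
  lapmx (faces K n) L wL n =
  diag_mx (\row_i wL (enum_val i)) *m (Bm K n)^T *m
  diag_mx (\row_b (if enum_val b \in L then wL (enum_val b) else 0)) *m Bm K n.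
Proof.
move=> LK hLK hw; rewrite mul_diag_mx mul_mx_diag; apply/matrixP => i j.
rewrite !mxE /up_lap.
under [RHS]eq_bigr => b _ do rewrite !mxE.
have hF : forall F, F \in faces K n -> F \in L.
  by move=> F; rewrite -hLK inE => /andP[].
have Fi := hF _ (enum_valP i).
case: (hw _ Fi) => ->; rewrite ?eqxx.
  by rewrite big1 // => b _; rewrite !mul0r.
rewrite oner_eq0 /=.
transitivity (\sum_(Fb in faces K n.+1)
  (if Fb \in L then wL Fb * coboundary (ind (enum_val i)) Fb *
       coboundary (ind (enum_val j)) Fb else 0)).
  rewrite -big_mkcondr /=.
  apply: eq_big => [Fb|Fb _]; last by rewrite inner_sum divr1.
  rewrite !inE; case FL: (Fb \in L); rewrite ?andbF ?andbT //.
  by rewrite (subsetP LK _ FL).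
rewrite big_enum_val; apply: eq_bigr => b _.
by case: ifP; rewrite ?mulr0 ?mul0r // mul1r (mulrC (wL _)).
Qed.
End Comb.

Section Glue.
Variable R : realType.
Local Notation phi := (real_complex R).

Lemma realC (x : R) : (phi x) \is Num.real.
Proof. by rewrite realE -[0]/((0 : R)%:C)%C !lecR le_total. Qed.

Lemma conjCR (x : R) : (phi x)^* = phi x.
Proof. by apply: conj_Creal; apply: realC. Qed.

Lemma adjR p m (B : 'M[R]_(p, m)) :
  (map_mx phi B)^t*%sesqui = map_mx phi B^T.
Proof. by apply/matrixP => i j; rewrite !mxE conjCR. Qed.

Lemma is01_phi m (d : 'rV[R]_m) : (forall i, d 0 i = 0 \/ d 0 i = 1) ->
  is01 (map_mx phi d).
Proof.
move=> hd i; rewrite mxE; case: (hd i) => ->; [left; exact: rmorph0 | right; exact: rmorph1].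
Qed.

Lemma char_phi m (M : 'M[R]_m) (s : seq R) :
  char_poly M = \prod_(x <- s) ('X - x%:P) ->
  char_poly (map_mx phi M) = \prod_(x <- map phi s) ('X - x%:P).
Proof.
move=> h; rewrite -map_char_poly h map_prod_XsubC big_map //.
Qed.

End Glue.

Unset Implicit Arguments.

Theorem corollary2p16 (R : realType) (N n : nat)
    (K L : {set {set 'I_N}}) (wL : {set 'I_N} -> R)
    (theta lambda : seq R) :
  is_complex K -> is_complex L -> L \subset K ->
  faces L n = faces K n ->
  (forall F, F \in L -> wL F = 0 \/ wL F = 1) ->
  eigen_seq (up_lap_mx L wL n) theta ->
  eigen_seq (up_lap_mx K (fun _ => 1) n) lambda ->
  forall k : nat, (k < size lambda)%N -> theta`_k <= lambda`_k.
Proof.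
move=> _ _ LK hLK hw [sth cth] [slam clam].
rewrite lapK in clam.
rewrite lapmxE hLK (lapL LK hLK hw) in cth.
set B := Bm R K n in cth clam.
set dd := \row_i wL (enum_val i) in cth.
set ww := \row_b (if enum_val b \in L then wL (enum_val b) else 0) in cth.
have hF : forall F, F \in faces K n -> F \in L.
  by move=> F; rewrite -hLK inE => /andP[].
apply: count_nth => //.
  have := congr1 (fun p : {poly R} => size p) cth.
  have := congr1 (fun p : {poly R} => size p) clam.
  by rewrite /= !size_char_poly !size_prod_XsubC => -[<-] -[<-].
move=> t.
have hd : is01 (map_mx (real_complex R) dd).
  apply: is01_phi => i; rewrite mxE; apply: hw; apply: hF; exact: enum_valP.
have hww : is01 (map_mx (real_complex R) ww).
  apply: is01_phi => b; rewrite mxE; case: ifP => h; [exact: hw | by left].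
have sR : all (fun x => x \is Num.real) (map (real_complex R) theta).
  by apply/allP => x /mapP [y _ ->]; apply: realC.
have cP := char_phi cth.
have cQ := char_phi clam.
rewrite !map_mxM !map_diag_mx -adjR in cP.
rewrite map_mxM -adjR in cQ.
have := main_C hd hww sR (realC t) cP cQ.
rewrite !count_map.
have E : forall s : seq R, count (preim (real_complex R) (fun x => (x <= (t%:C)%C)%R)) s
  = count (fun x => (x <= t)%R) s.
  by move=> s; apply: eq_count => x /=; rewrite lecR.
by rewrite !E.
Qed.
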